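(* Let $k\ge 0$ be an integer and let $G$ be a finite graph (parallel edges allowed, no loops). Let $u_0\in V(G)$ and let $u_1,u_2$ be two distinct neighbors of $u_0$. Let $H$ be the graph obtained from $G$ by deleting all edges with one end $u_0$ and the other end $u_1$ or $u_2$, and let $\kappa$ be a $k$-edge-coloring of $H$. For $i=1,2$ let $m_i$ be the number of edges of $G$ with ends $u_0$ and $u_i$, and for $i=0,1,2$ let $S_i$ be the set of colors $\kappa(f)$ over all edges $f$ of $H$ incident with $u_i$. If $m_1+|S_0\cup S_1|\le k$, $m_2+|S_0\cup S_2|\le k$ and $m_1+m_2+|S_0\cup(S_1\cap S_2)|\le k$, then $\kappa$ can be extended to a $k$-edge-coloring of $G$.
   Context: A $k$-edge-coloring of a graph is a map $\kappa:E\to\{1,\dots,k\}$ such that $\kappa(e)\neq\kappa(f)$ for any two distinct edges $e,f$ sharing at least one end (parallel edges sharing both ends must receive different colors). *)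

(* Defs.v *)
(* A finite multigraph (parallel edges allowed, no loops) is
   given by finite types V (vertices), E (edges) and two end maps
   src tgt : E -> V with src e != tgt e for all e. *)
From mathcomp Require Import all_boot.
Set Implicit Arguments. Unset Strict Implicit. Unset Printing Implicit Defensive.

Section Multigraph.
Variables (V E : finType) (src tgt : E -> V).

Definition incident (e : E) (v : V) : bool := (src e == v) || (tgt e == v).

Definition joins (e : E) (a b : V) : bool :=
  ((src e == a) && (tgt e == b)) || ((src e == b) && (tgt e == a)).

Definition share_end (e f : E) : bool :=
  [exists v, incident e v && incident f v].

Definition proper_coloring_on (k : nat) (D : {set E}) (c : E -> 'I_k) : Prop :=
  forall e f, e \in D -> f \in D -> e != f -> share_end e f -> c e != c f.

Definition colors_at (k : nat) (D : {set E}) (c : E -> 'I_k) (v : V) : {set 'I_k} :=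
  [set c f | f in [set f in D | incident f v]].

Definition mult (a b : V) : nat := #|[set e | joins e a b]|.

End Multigraph.

(* Main.v *)
Require Import Defs.
From mathcomp Require Import all_boot.
From mathcomp Require Import zify.

Lemma inj_into (E C : finType) (A : {set E}) (Z : {set C}) (d : E -> C) :
  #|A| <= #|Z| ->
  exists f : E -> C, {in A &, injective f} /\ (forall e, e \in A -> f e \in Z).
Proof.
move=> hAZ.
have hi : forall e, e \in A -> index e (enum A) < size (enum Z).
  move=> e eA; rewrite -cardE; apply: leq_trans hAZ.
  by rewrite cardE index_mem mem_enum.
exists (fun e => nth (d e) (enum Z) (index e (enum A))); split.
  move=> e f eA fA /= h.
  move: h; rewrite (set_nth_default (d e) (d f) (hi f fA)) => /eqP.
  rewrite nth_uniq ?hi ?enum_uniq // => /eqP h.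
  by move: h; apply: index_inj; rewrite ?mem_enum.
move=> e eA; by rewrite -mem_enum mem_nth ?hi.
Qed.

Lemma subset_size (C : finType) (X : {set C}) n :
  n <= #|X| -> exists W : {set C}, W \subset X /\ #|W| = n.
Proof.
move=> hn; exists [set x in take n (enum X)]; split.
  by apply/subsetP => x; rewrite inE => /mem_take; rewrite mem_enum.
rewrite cardsE (card_uniqP _).
  by rewrite size_take -cardE; case: ltnP => // h; apply/eqP; rewrite eqn_leq h hn.
by apply: take_uniq; apply: enum_uniq.
Qed.

Lemma cardsU_disj (C : finType) (A B : {set C}) :
  (forall c, c \in A -> c \notin B) -> #|A :|: B| = #|A| + #|B|.
Proof.
move=> h; rewrite -cardsUI.
suff -> : A :&: B = set0 by rewrite cards0 addn0.
apply/setP => c; rewrite !inE; apply/negP => /andP [cA cB].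
by move: (h c cA); rewrite cB.
Qed.

Lemma share_joins (V E : finType) (src tgt : E -> V) e f a b :
  joins src tgt e a b -> share_end src tgt e f ->
  incident src tgt f a || incident src tgt f b.
Proof.
rewrite /joins /share_end /incident => hj /existsP [v /andP [iev ifv]].
case/orP: hj => /andP [/eqP ha /eqP hb]; case/orP: iev => /eqP hv;
 move: ifv; rewrite -hv -?ha -?hb => ->; by rewrite ?orbT.
Qed.

Theorem lemma4 (k : nat) (V E : finType) (src tgt : E -> V)
  (loopless : forall e, src e != tgt e)
  (u0 u1 u2 : V)
  (nb1 : exists e, joins src tgt e u0 u1)
  (nb2 : exists e, joins src tgt e u0 u2)
  (u12 : u1 != u2)
  (kappa : E -> 'I_k) :
  let DH := [set e | ~~ joins src tgt e u0 u1 && ~~ joins src tgt e u0 u2] in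
  proper_coloring_on src tgt DH kappa ->
  let m1 := mult src tgt u0 u1 in
  let m2 := mult src tgt u0 u2 in
  let S0 := colors_at src tgt DH kappa u0 in
  let S1 := colors_at src tgt DH kappa u1 in
  let S2 := colors_at src tgt DH kappa u2 in
  m1 + #|S0 :|: S1| <= k ->
  m2 + #|S0 :|: S2| <= k ->
  m1 + m2 + #|S0 :|: (S1 :&: S2)| <= k ->
  exists kappa' : E -> 'I_k,
    proper_coloring_on src tgt [set: E] kappa' /\
    (forall e, e \in DH -> kappa' e = kappa e).
Proof.
move=> DH hprop m1 m2 S0 S1 S2 h1 h2 h3.
pose N1 := ~: (S0 :|: S1). pose N2 := ~: (S0 :|: S2).
pose N12 := ~: (S0 :|: (S1 :&: S2)).
pose X := ~: (S0 :|: S1 :|: S2). pose Y1 := N1 :&: S2. pose Y2 := N2 :&: S1.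
have cN : forall A : {set 'I_k}, #|~: A| = k - #|A|.
  by move=> A; have := cardsC A; rewrite card_ord; lia.
have bt : forall c, (c \in X) = ~~ (c \in S0) && ~~ (c \in S1) && ~~ (c \in S2).
  by move=> c; rewrite !inE !negb_or.
have eN1 : #|X| + #|Y1| = #|N1|.
  have -> : X = N1 :\: S2.
    by apply/setP => c; rewrite bt !inE; case: (c \in S0); case: (c \in S1); case: (c \in S2).
  by rewrite addnC cardsID.
have eN2 : #|X| + #|Y2| = #|N2|.
  have -> : X = N2 :\: S1.
    by apply/setP => c; rewrite bt !inE; case: (c \in S0); case: (c \in S1); case: (c \in S2).
  by rewrite addnC cardsID.
have eN12 : #|X| + #|Y1| + #|Y2| = #|N12|.
  rewrite eN1 -(cardsID N1 N12) setIC.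
  have -> : N12 :\: N1 = Y2.
    by apply/setP => c; rewrite !inE; case: (c \in S0); case: (c \in S1); case: (c \in S2).
  have -> : N1 :&: N12 = N1.
    by apply/setP => c; rewrite !inE; case: (c \in S0); case: (c \in S1); case: (c \in S2).
  by [].
have {}eN1 : #|X| + #|Y1| = k - #|S0 :|: S1| by rewrite eN1 cN.
have {}eN2 : #|X| + #|Y2| = k - #|S0 :|: S2| by rewrite eN2 cN.
have {}eN12 : #|X| + #|Y1| + #|Y2| = k - #|S0 :|: (S1 :&: S2)| by rewrite eN12 cN.
have [W [hWX hW]] := @subset_size _ X (m1 - #|Y1|) ltac:(lia).
have hWc : forall c, c \in W -> c \in X by move=> c; apply: (subsetP hWX).
pose Z1 := Y1 :|: W. pose Z2 := Y2 :|: (X :\: W).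
have dYW : forall c, c \in Y1 -> c \notin W.
  move=> c; move: (hWc c); rewrite !inE.
  by case: (c \in S0); case: (c \in S1); case: (c \in S2); case: (c \in W).
have dYX : forall c, c \in Y2 -> c \notin X :\: W.
  move=> c; rewrite !inE.
  by case: (c \in S0); case: (c \in S1); case: (c \in S2); case: (c \in W).
have cZ1 : #|Z1| = #|Y1| + #|W| by apply: cardsU_disj.
have cZ2 : #|Z2| = #|Y2| + (#|X| - #|W|).
  by rewrite cardsU_disj // cardsD (setIidPr hWX).
have dZ : forall c, c \in Z1 -> c \notin Z2.
  move=> c; move: (hWc c); rewrite !inE.
  by case: (c \in S0); case: (c \in S1); case: (c \in S2); case: (c \in W).
have sZ1 : forall c, c \in Z1 -> c \notin S0 :|: S1.
  move=> c; move: (hWc c); rewrite !inE.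
  by case: (c \in S0); case: (c \in S1); case: (c \in S2); case: (c \in W).
have sZ2 : forall c, c \in Z2 -> c \notin S0 :|: S2.
  move=> c; rewrite !inE.
  by case: (c \in S0); case: (c \in S1); case: (c \in S2); case: (c \in W).
have [f1 [i1 z1]] := @inj_into _ _ [set e | joins src tgt e u0 u1] Z1 kappa
  ltac:(rewrite cZ1 -/(mult src tgt u0 u1) -/m1; lia).
have [f2 [i2 z2]] := @inj_into _ _ [set e | joins src tgt e u0 u2] Z2 kappa
  ltac:(rewrite cZ2 -/(mult src tgt u0 u2) -/m2; lia).
pose kp e := if joins src tgt e u0 u1 then f1 e
             else if joins src tgt e u0 u2 then f2 e else kappa e.
have inS : forall f a, f \in DH -> incident src tgt f a ->
    kappa f \in colors_at src tgt DH kappa a.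
  move=> f a fD fa; apply: imset_f; by rewrite inE fD fa.
have key : forall e f, e != f -> share_end src tgt e f ->
    joins src tgt e u0 u1 || joins src tgt e u0 u2 -> kp e != kp f.
  move=> e f nef sh; rewrite /kp.
  case j1: (joins src tgt e u0 u1) => /=.
    move=> _.
    have ez : f1 e \in Z1 by apply: z1; rewrite inE.
    case k1: (joins src tgt f u0 u1).
      apply: contra nef => /eqP h; apply/eqP; apply: i1 h; by rewrite inE.
    case k2: (joins src tgt f u0 u2).
      apply/eqP => h; move: (dZ _ ez); rewrite h z2 // inE //.
    have fD : f \in DH by rewrite inE k1 k2.
    apply/eqP => h; move: (sZ1 _ ez); rewrite h inE.
    by case/orP: (@share_joins _ _ src tgt e f u0 u1 j1 sh) => /(inS _ _ fD) ->; rewrite ?orbT.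
  move=> j2; rewrite j2.
  have ez : f2 e \in Z2 by apply: z2; rewrite inE.
  case k1: (joins src tgt f u0 u1).
    apply/eqP => h; have fz : f1 f \in Z1 by apply: z1; rewrite inE.
    by move: (dZ _ fz); rewrite -h ez.
  case k2: (joins src tgt f u0 u2).
    apply: contra nef => /eqP h; apply/eqP; apply: i2 h; by rewrite inE.
  have fD : f \in DH by rewrite inE k1 k2.
  apply/eqP => h; move: (sZ2 _ ez); rewrite h inE.
  by case/orP: (@share_joins _ _ src tgt e f u0 u2 j2 sh) => /(inS _ _ fD) ->; rewrite ?orbT.
have shC : forall e f, share_end src tgt e f -> share_end src tgt f e.
  move=> e f /existsP [v /andP [a b]]; apply/existsP; exists v; by rewrite a b.
exists kp; split.
  move=> e f _ _ nef sh.
  case je: (joins src tgt e u0 u1 || joins src tgt e u0 u2); first exact: key.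
  case jf: (joins src tgt f u0 u1 || joins src tgt f u0 u2).
    by rewrite eq_sym; apply: key => //; [rewrite eq_sym | apply: shC].
  move/negbT/norP: je => [e1 e2]; move/negbT/norP: jf => [f1' f2'].
  rewrite /kp (negbTE e1) (negbTE e2) (negbTE f1') (negbTE f2').
  by apply: hprop => //; rewrite inE ?e1 ?f1'.
move=> e; rewrite inE => /andP [e1 e2].
by rewrite /kp (negbTE e1) (negbTE e2).
Qed.
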